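(* Let $\mathcal{H}$ be a complex Hilbert space with $\dim\mathcal{H}>1$. Then the Stone spectrum $\mathcal{Q}(\mathbb{L}(\mathcal{H}))$ is not compact, and if $\dim\mathcal{H}$ is infinite then $\mathcal{Q}(\mathbb{L}(\mathcal{H}))$ is not locally compact.
   Context: $\mathbb{L}(\mathcal{H})$ is the lattice of closed subspaces of $\mathcal{H}$ with $U\wedge V=U\cap V$, $U\vee V=\overline{U+V}$. A quasipoint in a lattice $\mathbb{L}$ with least element $0$ is a maximal (w.r.t. inclusion) subset $\mathfrak{B}\subseteq\mathbb{L}$ such that $\mathfrak{B}\neq\emptyset$, $0\notin\mathfrak{B}$, and for all $a,b\in\mathfrak{B}$ there is $c\in\mathfrak{B}$ with $c\le a\wedge b$. $\mathcal{Q}(\mathbb{L})$ denotes the set of quasipoints; for $a\in\mathbb{L}$ put $\mathcal{Q}_a(\mathbb{L})=\{\mathfrak{B}\in\mathcal{Q}(\mathbb{L}) : a\in\mathfrak{B}\}$. The Stone spectrum is $\mathcal{Q}(\mathbb{L})$ with the topology having the sets $\mathcal{Q}_a(\mathbb{L})$ as a basis. *)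

(* Defs.v *)
From Stdlib Require List.
From HB Require Import structures.
From mathcomp Require Import all_boot all_order all_algebra.
From mathcomp Require Import complex.
From mathcomp Require Import reals.

Set Implicit Arguments.
Unset Strict Implicit.
Unset Printing Implicit Defensive.

Import Order.TTheory GRing.Theory Num.Theory.
Local Open Scope ring_scope.

Section Hilbert.
Variables (R : realType) (H : lmodType R[i]).
Variable ip : H -> H -> R[i].

Definition hnorm (x : H) : R := Num.sqrt (complex.Re (ip x x)).

Definition hcauchy (u : nat -> H) : Prop :=
  forall e : R, 0 < e -> exists N : nat, forall m n : nat,
    (N <= m)%N -> (N <= n)%N -> hnorm (u m - u n) < e.

Definition hcvg (u : nat -> H) (x : H) : Prop :=
  forall e : R, 0 < e -> exists N : nat, forall n : nat,
    (N <= n)%N -> hnorm (u n - x) < e.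

Record is_hilbert : Prop := IsHilbert {
  ip_linl : forall (a : R[i]) (x y z : H), ip (a *: x + y) z = a * ip x z + ip y z;
  ip_conj : forall x y : H, ip y x = (ip x y)^*;
  ip_ge0  : forall x : H, 0 <= ip x x;
  ip_def  : forall x : H, ip x x = 0 -> x = 0;
  ip_complete : forall u : nat -> H, hcauchy u -> exists x, hcvg u x
}.

(* linear (Hamel) dimension *)
Definition lin_indep2 (x y : H) : Prop :=
  forall a b : R[i], a *: x + b *: y = 0 -> a = 0 /\ b = 0.

Definition dim_gt1 : Prop := exists x y : H, lin_indep2 x y.

Definition finite_dim : Prop :=
  exists s : seq H, forall x : H, exists c : nat -> R[i],
    x = \sum_(k < size s) c k *: nth 0 s k.

Definition closed_subspace (S : H -> Prop) : Prop :=
  [/\ S 0,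
      forall (a : R[i]) (x y : H), S x -> S y -> S (a *: x + y) &
      forall (u : nat -> H) (x : H), (forall n, S (u n)) -> hcvg u x -> S x].

Definition LH := { S : H -> Prop | closed_subspace S }.

Definition Lle (U V : LH) : Prop := forall x, proj1_sig U x -> proj1_sig V x.

Definition Lzero (U : LH) : Prop := forall x, proj1_sig U x <-> x = 0.

Definition Lle_meet (c a b : LH) : Prop :=
  forall x, proj1_sig c x -> proj1_sig a x /\ proj1_sig b x.

Definition filter_base (B : LH -> Prop) : Prop :=
  [/\ exists a, B a,
      forall a, B a -> ~ Lzero a &
      forall a b, B a -> B b -> exists c, B c /\ Lle_meet c a b].

Definition quasipoint (B : LH -> Prop) : Prop :=
  filter_base B /\
  forall B' : LH -> Prop, filter_base B' -> (forall a, B a -> B' a) ->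
    forall a, B' a -> B a.

Definition QP := { B : LH -> Prop | quasipoint B }.

Definition Qa (a : LH) : QP -> Prop := fun B => proj1_sig B a.

Definition Qopen (O : QP -> Prop) : Prop :=
  forall B, O B -> exists a, Qa a B /\ forall B', Qa a B' -> O B'.

Definition Qcompact (K : QP -> Prop) : Prop :=
  forall (I : Type) (O : I -> QP -> Prop),
    (forall i, Qopen (O i)) ->
    (forall B, K B -> exists i, O i B) ->
    exists s : seq I, forall B, K B -> exists i, List.In i s /\ O i B.

Definition stone_compact : Prop := Qcompact (fun _ => True).

Definition stone_locally_compact : Prop :=
  forall B : QP, exists K : QP -> Prop, Qcompact K /\
    exists O, Qopen O /\ O B /\ forall B', O B' -> K B'.

End Hilbert.

(* Main.v *)
Require Import Defs.
From HB Require Import structures.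
From mathcomp Require Import all_boot all_order all_algebra.
From mathcomp Require Import complex.
From mathcomp Require Import reals.
From Stdlib Require Import Classical.
From mathcomp Require classical_sets.
Set Implicit Arguments.
Unset Strict Implicit.
Unset Printing Implicit Defensive.
Import Order.TTheory GRing.Theory Num.Theory.
Local Open Scope ring_scope.

Section Hil.
Variables (R : realType) (H : lmodType R[i]) (ip : H -> H -> R[i]).
Hypothesis hH : is_hilbert ip.

Lemma ip0l z : ip 0 z = 0.
Proof.
have e := ip_linl hH 1 0 0 z; rewrite scaler0 addr0 mul1r in e.
have := congr1 (fun t => t - ip 0 z) e; rewrite addrK subrr => <-. by [].
Qed.

Lemma ipDl x y z : ip (x + y) z = ip x z + ip y z.
Proof. by have := ip_linl hH 1 x y z; rewrite scale1r mul1r. Qed.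

Lemma ipZl a x z : ip (a *: x) z = a * ip x z.
Proof. by have := ip_linl hH a x 0 z; rewrite addr0 ip0l addr0. Qed.

Lemma ipNl x z : ip (- x) z = - ip x z.
Proof. by rewrite -scaleN1r ipZl mulN1r. Qed.

Lemma ipBl x y z : ip (x - y) z = ip x z - ip y z.
Proof. by rewrite ipDl ipNl. Qed.

Lemma ip_linr a x y z : ip z (a *: x + y) = a^* * ip z x + ip z y.
Proof.
by rewrite (ip_conj hH) ip_linl // rmorphD rmorphM /= -!(ip_conj hH).
Qed.

Lemma ip0r z : ip z 0 = 0.
Proof. by rewrite (ip_conj hH) ip0l conjC0. Qed.

Lemma ipDr x y z : ip z (x + y) = ip z x + ip z y.
Proof. by have := ip_linr 1 x y z; rewrite scale1r conjC1 mul1r. Qed.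

Lemma ipZr a x z : ip z (a *: x) = a^* * ip z x.
Proof. by have := ip_linr a x 0 z; rewrite addr0 ip0r addr0. Qed.

Lemma ipNr x z : ip z (- x) = - ip z x.
Proof. by rewrite -scaleN1r ipZr rmorphN1 mulN1r. Qed.

Lemma ipBr x y z : ip z (x - y) = ip z x - ip z y.
Proof. by rewrite ipDr ipNr. Qed.

Lemma pyth a x w : ip w x = 0 ->
  ip (a *: x + w) (a *: x + w) = a * a^* * ip x x + ip w w.
Proof.
move=> hw; have hw' : ip x w = 0 by rewrite (ip_conj hH) hw conjC0.
rewrite ip_linl // !ip_linr // hw hw' !mulr0 !addr0 mulrA.
by rewrite add0r.
Qed.

Lemma ipxx_eq0 x : (ip x x == 0) = (x == 0).
Proof.
apply/eqP/eqP => [/(ip_def hH)//|->]; exact: ip0l.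
Qed.

Lemma small (u : nat -> H) y c : hcvg ip u y -> 0 <= c ->
  (forall n, c <= ip (u n - y) (u n - y)) -> c = 0.
Proof.
move=> hu c0 hc; apply/eqP; apply: contraT => cn0.
have cp : 0 < c by rewrite lt_def cn0 c0.
have rp : 0 < complex.Re c.
  by move: cp; rewrite ltcE => /andP[_].
have [N hN] : exists N, forall n, (N <= n)%N -> hnorm ip (u n - y) < Num.sqrt (complex.Re c) by apply: hu; rewrite sqrtr_gt0.
have := hN N (leqnn N); rewrite /hnorm ltr_sqrt // => h.
have := hc N; rewrite lecE => /andP[_]; rewrite leNgt h. by [].
Qed.

Lemma ip_cont (u : nat -> H) y s : hcvg ip u y ->
  (forall n, ip (u n) s = 0) -> ip y s = 0.
Proof.
move=> hu hs; have [->|sn0] := eqVneq s 0; first exact: ip0r.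
have ss0 : ip s s != 0 by rewrite ipxx_eq0.
set al := - ip y s / ip s s.
have hc : forall n, al * al^* * ip s s <= ip (u n - y) (u n - y).
  move=> n; set v := u n - y.
  have ev : v = al *: s + (v - al *: s) by rewrite addrC subrK.
  have hw : ip (v - al *: s) s = 0.
    by rewrite ipBl ipZl /v ipBl hs add0r /al divfK // subrr.
  rewrite ev pyth // lerDl; exact: ip_ge0.
have := small hu _ hc; rewrite mulr_ge0 ?mul_conjC_ge0 ?ip_ge0 // => /(_ isT).
move/eqP; rewrite mulf_eq0 (negbTE ss0) orbF mul_conjC_eq0 /al mulf_eq0.
by rewrite invr_eq0 (negbTE ss0) orbF oppr_eq0 => /eqP.
Qed.

Definition perp (S : seq H) (x : H) : Prop := forall s, s \in S -> ip x s = 0.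

Lemma perp_closed S : closed_subspace ip (perp S).
Proof.
split.
- by move=> s _; exact: ip0l.
- by move=> a x y hx hy s hs; rewrite ip_linl // hx // hy // mulr0 addr0.
- move=> u x hu hc s hs; apply: (ip_cont hc) => n; exact: hu.
Qed.

Definition perpL S : LH ip := exist _ (perp S) (perp_closed S).

Definition line (w : H) (x : H) : Prop := exists l, x = l *: w.

Lemma line_closed w : closed_subspace ip (line w).
Proof.
split.
- by exists 0; rewrite scale0r.
- by move=> a x y [l ->] [l' ->]; exists (a * l + l'); rewrite scalerDl scalerA.
- move=> u y hu hc.
  have [al hal] : exists al, ip (y - al *: w) w = 0.
    have [->|wn0] := eqVneq w 0; first by exists 0; rewrite ip0r.
    exists (ip y w / ip w w); rewrite ipBl ipZl divfK ?subrr //.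
    by rewrite ipxx_eq0.
  set z := y - al *: w.
  have hwz : ip w z = 0 by rewrite (ip_conj hH) hal conjC0.
  have hyz : ip y z = 0.
    apply: (ip_cont hc) => n; have [l ->] := hu n; by rewrite ipZl hwz mulr0.
  have : ip z z = 0 by rewrite {1}/z ipBl ipZl hwz mulr0 subr0.
  move/(ip_def hH) => /eqP; rewrite subr_eq0 => /eqP ->; by exists al.
Qed.

Definition lineL w : LH ip := exist _ (line w) (line_closed w).

Lemma sub0 (b : LH ip) : sval b 0.
Proof. by case: b => ? []. Qed.

Lemma subL (b : LH ip) a x y : sval b x -> sval b y -> sval b (a *: x + y).
Proof. by case: b => ? [] /= _ h _; exact: h. Qed.

Lemma subZ (b : LH ip) a x : sval b x -> sval b (a *: x).
Proof. by move=> hx; have := subL a hx (sub0 b); rewrite addr0. Qed.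

Lemma subD (b : LH ip) x y : sval b x -> sval b y -> sval b (x + y).
Proof. by move=> hx hy; have := subL 1 hx hy; rewrite scale1r. Qed.

Lemma subB (b : LH ip) x y : sval b x -> sval b y -> sval b (x - y).
Proof. by move=> hx hy; have := subL (-1) hy hx; rewrite scaleN1r addrC. Qed.

Lemma fresh_aux (S : seq R[i]) : exists t : R[i], 0 <= t /\ forall s, s \in S -> `|s| < t.
Proof.
elim: S => [|s S [t [t0 ht]]]; first by exists 0; split.
exists (t + (`|s| + 1)); split; first by rewrite addr_ge0 // addr_ge0.
move=> s'; rewrite in_cons => /orP[/eqP ->|hs'].
  by rewrite addrCA ltrDl ltr_wpDl.
apply: (lt_trans (ht _ hs')); rewrite ltrDl ltr_wpDl //.
Qed.

Lemma fresh (S : seq R[i]) : exists t, t \notin S.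
Proof.
have [t [t0 ht]] := fresh_aux S; exists t; apply/negP => /ht.
by rewrite ger0_norm // ltxx.
Qed.

Lemma avoid_line (w v : H) (l : seq (LH ip)) :
  (forall b, List.In b l -> ~ sval b w) -> forall S : seq R[i],
  exists t, t \notin S /\ forall b, List.In b l -> ~ sval b (w + t *: v).
Proof.
elim: l => [|b l IH] hl S.
  by have [t ht] := fresh S; exists t; split => // b.
have hl' : forall b', List.In b' l -> ~ sval b' w.
  by move=> b' hb'; apply: hl; right.
have hb : ~ sval b w by apply: hl; left.
case: (classic (exists t0, sval b (w + t0 *: v))) => [[t0 ht0]|nex].
- have [t [htS htl]] := IH hl' (t0 :: S).
  exists t; split; first by move: htS; rewrite in_cons negb_or => /andP[].
  move=> b' /= [<-|]; last exact: htl.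
  move=> hbt; move: htS; rewrite in_cons negb_or => /andP[tt0 _].
  have hv : sval b v.
    have := subB hbt ht0.
    rewrite opprD addrACA subrr add0r -scalerBl => /(subZ (t - t0)^-1).
    by rewrite scalerA mulVf ?scale1r // subr_eq0.
  apply: hb; have := subB hbt (subZ t hv); by rewrite addrK.
- have [t [htS htl]] := IH hl' S; exists t; split => //.
  move=> b' /= [<-|]; last exact: htl.
  by move=> h; apply: nex; exists t.
Qed.

Lemma avoid (A : LH ip) (l : seq (LH ip)) :
  (forall b, List.In b l -> exists v, sval A v /\ ~ sval b v) ->
  exists w, sval A w /\ forall b, List.In b l -> ~ sval b w.
Proof.
elim: l => [|b l IH] hl; first by exists 0; split; [exact: sub0|].
have [w [hwA hwl]] : exists w, sval A w /\ forall b, List.In b l -> ~ sval b w.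
  by apply: IH => b' hb'; apply: hl; right.
case: (classic (sval b w)) => hbw; last first.
  by exists w; split => // b' /= [<-|]; [|exact: hwl].
have [v [hvA hvb]] := hl b (or_introl erefl).
have [t [ht htl]] := avoid_line v hwl [:: 0].
exists (w + t *: v); split; first by rewrite addrC; exact: subL.
move=> b' /= [<-|]; last exact: htl.
move=> h; apply: hvb; have := subB h hbw; rewrite addrC addKr => /(subZ t^-1).
rewrite scalerA mulVf ?scale1r //; by move: ht; rewrite in_cons negb_or => /andP[].
Qed.

Definition span (S : seq H) (p : H) : Prop :=
  exists c : nat -> R[i], p = \sum_(k < size S) c k *: nth 0 S k.

Lemma span0 S : span S 0.
Proof. by exists (fun _ => 0); rewrite big1 // => k _; rewrite scale0r. Qed.

Lemma span_lin S a x y : span S x -> span S y -> span S (a *: x + y).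
Proof.
move=> [cx ->] [cy ->]; exists (fun k => a * cx k + cy k).
rewrite scaler_sumr -big_split; apply: eq_bigr => k _.
by rewrite scalerDl scalerA.
Qed.

Lemma span_tail s S x : span S x -> span (s :: S) x.
Proof.
move=> [c ->]; exists (fun k => if k is k'.+1 then c k' else 0).
by rewrite /= big_ord_recl /= scale0r add0r.
Qed.

Lemma span_head s S : span (s :: S) s.
Proof.
exists (fun k => if k is 0 then 1 else 0).
rewrite /= big_ord_recl /= scale1r big1 ?addr0 // => k _; exact: scale0r.
Qed.

Lemma perp_span S r p : perp S r -> span S p -> ip p r = 0.
Proof.
move=> hr [c ->]; apply: (big_ind (fun v => ip v r = 0)).
- exact: ip0l.
- by move=> x y hx hy; rewrite ipDl hx hy addr0.
- move=> k _; rewrite ipZl (ip_conj hH) hr ?conjC0 ?mulr0 //; exact: mem_nth.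
Qed.

Lemma proj S x : exists p r, x = p + r /\ span S p /\ perp S r.
Proof.
elim: S x => [|s S IH] x.
  by exists 0, x; split; [rewrite add0r|split; [exact: span0|]].
have [ps [rs [es [sps prs]]]] := IH s.
have [px [rx [ex [spx prx]]]] := IH x.
have [rs0|rsn0] := eqVneq rs 0.
  exists px, rx; split => //; split; first exact: span_tail.
  move=> s'; rewrite in_cons => /orP[/eqP ->|]; last exact: prx.
  by rewrite es rs0 addr0 (ip_conj hH) (perp_span prx sps) conjC0.
set mu := ip rx rs / ip rs rs.
have hrr : ip rs rs != 0 by rewrite ipxx_eq0.
exists (px + mu *: rs), (rx - mu *: rs); split.
  by rewrite ex addrACA subrr addr0.
have prS : perp S (rx - mu *: rs).
  by move=> s' hs'; rewrite ipBl ipZl prx // prs // mulr0 subr0.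
split.
  rewrite addrC; apply: span_lin; last exact: span_tail.
  have -> : rs = (-1) *: ps + s by rewrite scaleN1r es addKr.
  by apply: span_lin; [exact: span_tail|exact: span_head].
move=> s'; rewrite in_cons => /orP[/eqP ->|]; last exact: prS.
rewrite es ipDr (ip_conj hH) (perp_span prS sps) conjC0 add0r.
by rewrite ipBl ipZl /mu divfK // subrr.
Qed.

Lemma inf_perp S : ~ finite_dim H -> exists x, x != 0 /\ perp S x.
Proof.
move=> nfd; apply: NNPP => hno; apply: nfd; exists S => x.
have [p [r [-> [[c ->] hr]]]] := proj S x.
have -> : r = 0.
  apply: NNPP => rn0; apply: hno; exists r; split => //; exact/eqP.
by exists c; rewrite addr0.
Qed.

Lemma nz_elt (c : LH ip) : ~ Lzero c -> exists x, sval c x /\ x != 0.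
Proof.
move=> hc; apply: NNPP => hno; apply: hc => x; split; last by move=> ->; exact: sub0.
move=> cx; apply: NNPP => xn0; apply: hno; exists x; split => //; exact/eqP.
Qed.

Lemma line_nz (c : LH ip) x w : sval c x -> x != 0 -> line w x -> sval c w.
Proof.
move=> cx xn0 [l el]; have ln0 : l != 0.
  by apply: contraNneq xn0 => l0; rewrite el l0 scale0r.
have := subZ l^-1 cx; by rewrite el scalerA mulVf // scale1r.
Qed.

Definition Pw (w : H) : LH ip -> Prop := fun b => sval b w.

Lemma Pw_qp w : w != 0 -> quasipoint (Pw w).
Proof.
move=> wn0; have lw : line w w by exists 1; rewrite scale1r.
split.
  split.
  - by exists (lineL w).
  - by move=> a aw /(_ w) [/(_ aw) /eqP]; rewrite (negbTE wn0).
  - move=> a b aw bw; exists (lineL w); split => //.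
    by move=> x [l ->]; split; apply: subZ.
move=> B' [_ nz dir] hB a aB'.
have [c [cB' hc]] := dir _ _ aB' (hB (lineL w) lw).
have [x [cx xn0]] := nz_elt (nz _ cB').
have := line_nz cx xn0 (proj2 (hc x cx)).
by move/hc => [].
Qed.

Definition topL : LH ip.
Proof. by exists (fun _ => True); split. Defined.

Lemma key (a : LH ip) (w0 : H) (K : QP ip -> Prop) : w0 != 0 -> sval a w0 ->
  ~ (forall x, sval a x -> line w0 x) -> Qcompact K ->
  (forall B, Qa a B -> K B) -> False.
Proof.
move=> w0n0 aw0 naL hK hKa.
pose I := {b : LH ip | ~ (forall x, sval a x -> sval b x)}.
have op : forall i : I, Qopen (Qa (sval i)).
  by move=> i B hB; exists (sval i); split.
have cov : forall B, K B -> exists i : I, Qa (sval i) B.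
  move=> B _; apply: NNPP => hno.
  have all_a : forall b, sval B b -> forall x, sval a x -> sval b x.
    move=> b bB; apply: NNPP => nab; apply: hno.
    by exists (exist _ b nab).
  case: (svalP B) => [[ne nz dir] mx]; apply: naL.
  have hL : sval B (lineL w0).
    apply: (mx (fun b => sval B b \/ b = lineL w0)); last by right.
    + split.
      * by exists (lineL w0); right.
      * move=> b [/nz //|-> /(_ w0) [/(_ (ex_intro _ 1 (esym (scale1r w0)))) /eqP]].
        by rewrite (negbTE w0n0).
      * have La : forall x, line w0 x -> sval a x by move=> x [l ->]; exact: subZ.
        move=> b1 b2 [h1|->] [h2|->].
        -- by have [c [cB hc]] := dir _ _ h1 h2; exists c; split; [left|].
        -- exists (lineL w0); split; [by right|] => x hx; split => //.
           exact: all_a h1 _ (La _ hx).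
        -- exists (lineL w0); split; [by right|] => x hx; split => //.
           exact: all_a h2 _ (La _ hx).
        -- by exists (lineL w0); split; [right|].
    + by move=> b bB; left.
  exact: all_a hL.
have [s hs] := hK I (fun i => Qa (sval i)) op cov.
have prem : forall b, List.In b (lineL 0 :: List.map sval s) ->
    exists v, sval a v /\ ~ sval b v.
    move=> b /= [<-|/List.in_map_iff [i [<- _]]].
      exists w0; split => // [[l]]; rewrite scaler0 => e.
      by move: w0n0; rewrite e eqxx.
    have hi := svalP i; apply: NNPP => hno; apply: hi => x xa.
    by apply: NNPP => nx; apply: hno; exists x.
  have [w [wa wl]] := avoid prem.
  have wn0 : w != 0.
    by apply/eqP => w0'; apply: (wl (lineL 0)); [left|exists 0; rewrite scaler0].
  pose qp : QP ip := exist _ (Pw w) (Pw_qp wn0).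
  have [i [ins hi]] := hs qp (hKa qp wa).
  apply: (wl (sval i)); first by right; apply: List.in_map.
  exact: hi.
Qed.

Definition F0 (b : LH ip) : Prop := exists S, b = perpL S.

Lemma fbF0 : ~ finite_dim H -> filter_base F0.
Proof.
move=> nfd; split.
- by exists (perpL [::]), [::].
- move=> a [S ->] hz; have [x [xn0 px]] := inf_perp S nfd.
  by move: xn0; have [/(_ px) -> _] := hz x; rewrite eqxx.
- move=> a b [S ->] [T ->]; exists (perpL (S ++ T)); split; first by exists (S ++ T).
  by move=> x hx; split => s hs; apply: hx; rewrite mem_cat hs ?orbT.
Qed.

Lemma exists_qp : ~ finite_dim H ->
  exists Bq : LH ip -> Prop, quasipoint Bq /\ forall S, Bq (perpL S).
Proof.
move=> nfd; have [ne0 nz0 dir0] := fbF0 nfd.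
pose P := fun X : LH ip -> Prop => filter_base (fun b => X b \/ F0 b).
have hch : forall F : (LH ip -> Prop) -> Prop, (forall X, F X -> P X) ->
    classical_sets.total_on F (@classical_sets.subset _) ->
    P (classical_sets.bigcup F id).
  move=> F FP tot; split.
  - by have [b hb] := ne0; exists b; right.
  - move=> a [[X FX Xa]|/nz0 //].
    by have [_ nzX _] := FP X FX; apply: nzX; left.
  - have up : forall X, F X -> forall b, X b \/ F0 b ->
        classical_sets.bigcup F id b \/ F0 b.
      by move=> X FX b [Xb|]; [left; exists X|right].
    move=> a b [[X FX Xa]|Fa] [[Y FY Yb]|Fb].
    + have [XY|YX] := tot X Y FX FY.
      * have [_ _ d] := FP Y FY; have [c [hc hcab]] := d a b (or_introl (XY _ Xa)) (or_introl Yb).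
        by exists c; split => //; apply: up hc.
      * have [_ _ d] := FP X FX; have [c [hc hcab]] := d a b (or_introl Xa) (or_introl (YX _ Yb)).
        by exists c; split => //; apply: up hc.
    + have [_ _ d] := FP X FX; have [c [hc hcab]] := d a b (or_introl Xa) (or_intror Fb).
      by exists c; split => //; apply: up hc.
    + have [_ _ d] := FP Y FY; have [c [hc hcab]] := d a b (or_intror Fa) (or_introl Yb).
      by exists c; split => //; apply: up hc.
    + by have [c [hc hcab]] := dir0 a b Fa Fb; exists c; split => //; right.
have [A [PA mxA]] := classical_sets.Zorn_bigcup hch.
exists (fun b => A b \/ F0 b); split; last by move=> S; right; exists S.
split => // B' fbB' hsub a aB'.
apply: NNPP => na.
apply: (mxA B').
  split; first by move=> x Ax; apply: hsub; left.
  by move=> /(_ a aB') Aa; apply: na; left.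
have [neB nzB dirB] := fbB'.
have eqv : forall b, B' b \/ F0 b <-> B' b.
  by move=> b; split => [[//|Fb]|]; [apply: hsub; right|left].
split.
- by have [b hb] := neB; exists b; left.
- by move=> b /eqv /nzB.
- move=> b1 b2 /eqv h1 /eqv h2; have [c [hc hc']] := dirB _ _ h1 h2.
  by exists c; split => //; left.
Qed.
End Hil.

Theorem proposition3p51 (R : realType) (H : lmodType R[i]) (ip : H -> H -> R[i]) :
  is_hilbert ip -> dim_gt1 H ->
  ~ stone_compact ip /\ (~ finite_dim H -> ~ stone_locally_compact ip).
Proof.
move=> hH [x [y hind]]; split.
- move=> hc.
  have xn0 : x != 0.
    apply/eqP => x0; have := hind 1 0; rewrite x0 scaler0 scale0r addr0.
    by move=> /(_ erefl) [/eqP]; rewrite oner_eq0.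
  apply: (@key _ _ _ hH (topL ip) x (fun _ => True) xn0 I) => //.
  move=> /(_ y I) [l el]; have := hind l (-1).
  rewrite scaleN1r -el subrr => /(_ erefl) [_ /eqP].
  by rewrite oppr_eq0 oner_eq0.
- move=> nfd hlc.
  have [Bq [qp hS]] := exists_qp hH nfd.
  pose B : QP ip := exist _ Bq qp.
  have [K [hK [O [hO [OB OK]]]]] := hlc B.
  have [a [aB aO]] := hO B OB.
  have [[_ nz dir] _] := qp.
  have [w0 [aw0 w0n0]] := nz_elt (nz a aB).
  apply: (@key _ _ _ hH a w0 K w0n0 aw0) => //; last by move=> B' /aO /OK.
  move=> aL.
  have [c [cB hc]] := dir _ _ aB (hS [:: w0]).
  have [z [cz zn0]] := nz_elt (nz c cB).
  have cw0 := line_nz cz zn0 (aL _ (proj1 (hc z cz))).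
  have := proj2 (hc _ cw0) w0 (mem_head _ _).
  by move/(ip_def hH)/eqP; rewrite (negbTE w0n0).
Qed.
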